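(* Define $\mathcal F_c(b):=P_c\mathcal F(b)$ for $b\in\mathcal N$. Fix $e\in\mathcal N$ with $\|e\|=1$, so that $\mathcal N=\mathrm{span}\{e\}$ is identified with $\mathbb R$ via $\xi\mapsto\xi e$. Then $\mathcal F_c$ is a stable cubic on $\mathcal N\cong\mathbb R$: there is a constant $C>0$ such that $\mathcal F_c(\xi e)=-C\xi^3e$ for all $\xi\in\mathbb R$.
   Context: $\mathcal H$ is a separable real Hilbert space. $A$ is a symmetric, non-positive linear operator on $\mathcal H$ generating a compact analytic semigroup. It has a one-dimensional kernel $\mathcal N$, and $P_c$ denotes the orthogonal projection onto $\mathcal N$. For $\alpha\ge0$, $\mathcal H^\alpha=D((1-A)^\alpha)$. $X$ is a Banach space with continuous dense embeddings $\mathcal H^\alpha\subset X\subset\mathcal H$ for some $\alpha\in(0,1/2)$. $\mathcal F:X\to X^*\subset\mathcal H^{-\alpha}$ is cubic, i.e. $\mathcal F(u)=\mathcal F(u,u,u)$ for a trilinear map, and there is $c>0$ with $\langle\mathcal F(u)-\mathcal F(v),u-v\rangle\le -c\|u-v\|_X^4$ for all $u,v\in X$. *)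

(* Defs.v *)
From HB Require Import structures.
From mathcomp Require Import all_boot all_order all_algebra.
From mathcomp Require Import all_classical all_reals all_analysis.
Set Implicit Arguments. Unset Strict Implicit. Unset Printing Implicit Defensive.
Import Order.TTheory GRing.Theory Num.Theory.
Import numFieldNormedType.Exports.
Local Open Scope classical_set_scope.
Local Open Scope ring_scope.

Section Defs.
Context {R : realType}.

Section HSide.
Context {H : normedModType R}.

Definition inner_product (ip : H -> H -> R) : Prop :=
  [/\ forall (a : R) (x y z : H), ip (a *: x + y) z = a * ip x z + ip y z,
      forall x y : H, ip x y = ip y x &
      forall x : H, ip x x = `|x| ^+ 2].

Definition separable_space : Prop := exists s : nat -> H, dense (range s).

Definition lin_op_on (DA : set H) (A : H -> H) : Prop :=
  DA 0 /\ forall (a : R) (x y : H), DA x -> DA y ->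
    DA (a *: x + y) /\ A (a *: x + y) = a *: A x + A y.

Definition symmetric_op (ip : H -> H -> R) (DA : set H) (A : H -> H) : Prop :=
  forall x y, DA x -> DA y -> ip (A x) y = ip x (A y).

Definition nonpositive_op (ip : H -> H -> R) (DA : set H) (A : H -> H) : Prop :=
  forall x, DA x -> ip (A x) x <= 0.

Definition kernel_op (DA : set H) (A : H -> H) : set H :=
  [set x | DA x /\ A x = 0].

Definition one_dimensional (N : set H) : Prop :=
  exists e0 : H, e0 != 0 /\ N = [set t *: e0 | t in [set: R]].
End HSide.

Section XSide.
Context {X : normedModType R}.

Definition linear4 (T : X -> X -> X -> X -> R) : Prop :=
  [/\ forall a x y b c v, T (a *: x + y) b c v = a * T x b c v + T y b c v,
      forall a x y b c v, T b (a *: x + y) c v = a * T b x c v + T b y c v,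
      forall a x y b c v, T b c (a *: x + y) v = a * T b c x v + T b c y v &
      forall a x y b c v, T b c v (a *: x + y) = a * T b c v x + T b c v y].

(* F : X -> X^* (an element f of X^* is represented by f : X -> R,
   i.e. F u v = <F(u), v>) is cubic: F(u) = T(u,u,u) for a trilinear
   map T : X^3 -> X^*  (each T a b c is a continuous linear functional). *)
Definition cubic_dual (F : X -> X -> R) : Prop :=
  exists T : X -> X -> X -> X -> R,
    [/\ linear4 T, forall a b c, continuous (T a b c) &
        forall u v, F u v = T u u u v].

Definition dissipative4 (F : X -> X -> R) (c : R) : Prop :=
  forall u v : X, F u (u - v) - F v (u - v) <= - (c * `|u - v| ^+ 4).
End XSide.

Section Proj.
Context {H X : normedModType R}.

(* Orthogonal projection onto N extended to functionals f in X^*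
   (N is contained in X via the embedding J): P_c f is the element
   p of N with <p, n>_H = <f, n> for every n in N. *)
Definition proj_dual (ip : H -> H -> R) (N : set H) (J : X -> H)
    (f : X -> R) : H :=
  xget 0 [set p | N p /\ forall x : X, N (J x) -> ip p (J x) = f x].

(* F_c(b) := P_c F(b) for b in N (b seen as an element of X via J) *)
Definition Fc (ip : H -> H -> R) (N : set H) (J : X -> H)
    (F : X -> X -> R) (b : H) : H :=
  proj_dual ip N J (F (xget 0 [set x | J x = b])).
End Proj.
End Defs.

(* Main.v *)
Require Import Defs.
From HB Require Import structures.
From mathcomp Require Import all_boot all_order all_algebra.
From mathcomp Require Import all_classical all_reals all_analysis.
From mathcomp Require Import ring lra.
Import Order.TTheory GRing.Theory Num.Theory.
Import numFieldNormedType.Exports.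
Local Open Scope classical_set_scope.
Local Open Scope ring_scope.

Lemma xget_uniq (T : choiceType) (x0 : T) (P : set T) (a : T) :
  P a -> (forall q, P q -> q = a) -> xget x0 P = a.
Proof.
move=> Pa U; case: xgetP => [y _ Py|nP]; first exact: U.
by exfalso; exact: (nP a Pa).
Qed.

Theorem lemma4p1 (R : realType) (H : completeNormedModType R)
  (X : completeNormedModType R)
  (ip : H -> H -> R) (DA : set H) (A : H -> H)
  (J : {linear X -> H}) (F : X -> X -> R) (c : R) (e : H) :
  inner_product ip -> separable_space (H := H) ->
  lin_op_on DA A -> symmetric_op ip DA A -> nonpositive_op ip DA A ->
  one_dimensional (kernel_op DA A) ->
  continuous J -> injective J -> dense (range J) ->
  DA `<=` range J ->
  cubic_dual F -> 0 < c -> dissipative4 F c ->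
  kernel_op DA A e -> `|e| = 1 ->
  exists C : R, 0 < C /\
    forall xi : R,
      Fc ip (kernel_op DA A) J F (xi *: e) = (- (C * xi ^+ 3)) *: e.
Proof.
move=> [ipL ipS ipN] _ _ _ _ [e0 [e00 KE]] _ Jinj _ DAJ [T [[T1 T2 T3 T4] _ FT]]
  c0 diss Ke e1.

have en0 : e != 0 by apply/eqP => E; move: e1; rewrite E normr0 => /eqP; rewrite eq_sym oner_eq0.
have KiffE : forall x, kernel_op DA A x <-> exists s : R, x = s *: e.
  have := Ke; rewrite KE => -[t0 _ et0].
  have t00 : t0 != 0 by apply/eqP => E; move: en0; rewrite -et0 E scale0r eqxx.
  move=> x; split.
    move=> [t _ <-]; exists (t / t0); by rewrite -et0 scalerA mulfVK.
  by move=> [s ->]; exists (s * t0) => //; rewrite -et0 scalerA.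
have [u1 _ Ju1] : range J e by apply: DAJ; case: Ke.
have ip0 : forall z, ip 0 z = 0.
  move=> z; have := ipL 1 0 0 z; rewrite scaler0 addr0 mul1r => h; lra.
have ipZ : forall a x z, ip (a *: x) z = a * ip x z.
  by move=> a x z; have := ipL a x 0 z; rewrite addr0 ip0 addr0.
have ipee : ip e e = 1 by rewrite ipN e1 expr1n.
have ipse : forall s t, ip (s *: e) (t *: e) = s * t.
  by move=> s t; rewrite ipZ ipS ipZ ipee mulr1.
have T10 : forall b d v, T 0 b d v = 0.
  move=> b d v; have := T1 1 0 0 b d v; rewrite scaler0 addr0 mul1r => h; lra.
have T20 : forall b d v, T b 0 d v = 0.
  move=> b d v; have := T2 1 0 0 b d v; rewrite scaler0 addr0 mul1r => h; lra.
have T30 : forall b d v, T b d 0 v = 0.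
  move=> b d v; have := T3 1 0 0 b d v; rewrite scaler0 addr0 mul1r => h; lra.
have T40 : forall b d v, T b d v 0 = 0.
  move=> b d v; have := T4 1 0 0 b d v; rewrite scaler0 addr0 mul1r => h; lra.
have T1Z : forall a x b d v, T (a *: x) b d v = a * T x b d v.
  by move=> a x b d v; have := T1 a x 0 b d v; rewrite addr0 T10 addr0.
have T2Z : forall a x b d v, T b (a *: x) d v = a * T b x d v.
  by move=> a x b d v; have := T2 a x 0 b d v; rewrite addr0 T20 addr0.
have T3Z : forall a x b d v, T b d (a *: x) v = a * T b d x v.
  by move=> a x b d v; have := T3 a x 0 b d v; rewrite addr0 T30 addr0.
have T4Z : forall a x b d v, T b d v (a *: x) = a * T b d v x.
  by move=> a x b d v; have := T4 a x 0 b d v; rewrite addr0 T40 addr0.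
have u10 : u1 != 0.
  by apply/eqP => E; move: en0; rewrite -Ju1 E linear0 eqxx.
set g := F u1 u1.
have gneg : g < 0.
  have := diss u1 0; rewrite subr0 (FT 0) T10 subr0 => H1.
  apply: (le_lt_trans H1); rewrite oppr_lt0 mulr_gt0 // exprn_gt0 //.
  by rewrite normr_gt0.
exists (- g); split; first by rewrite oppr_gt0.
move=> xi; rewrite /Fc /proj_dual.
have -> : xget 0 [set x | J x = xi *: e] = xi *: u1.
  apply: xget_uniq; first by rewrite /= linearZ Ju1.
  by move=> q /= Jq; apply: Jinj; rewrite Jq linearZ Ju1.
rewrite mulNr opprK.
apply: xget_uniq.
  split; first by apply/KiffE; exists (g * xi ^+ 3).
  move=> x /KiffE [t Jx].
  have -> : x = t *: u1 by apply: Jinj; rewrite Jx linearZ Ju1.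
  rewrite linearZ /= Ju1 ipse FT T4Z T1Z T2Z T3Z /g FT.
  by ring.
move=> q [/KiffE [s ->] Hq].
have := Hq u1; rewrite Ju1 => /(_ Ke).
rewrite ipZ ipee mulr1 FT T1Z T2Z T3Z /g FT => ->.
have -> : xi * (xi * (xi * T u1 u1 u1 u1)) = T u1 u1 u1 u1 * xi ^+ 3 by ring.
by [].
Qed.
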